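(* Consider the finite-horizon Markov decision process described in the context, with $N$ sources, $d\ge 1$ orthogonal channels, horizon $T<\infty$, transmission success probability $p\in(0,1]$ and arrival probabilities $q_1,\dots,q_N$. Let $V^*_t(x)$ be the optimal cost-to-go from epoch $t$ in state $x$ and let $V^\Delta_t(x)$ be the cost-to-go from epoch $t$ in state $x$ under the stationary policy $\pi^\Delta$. Set $$p_d := 1-(1-p)^d = p\,C_p,\qquad C_p=\sum_{l=0}^{d-1}(-1)^l\binom{d}{l+1}p^l .$$ Then there exists a sequence of non-negative functions $\{\mathcal Z_t(x)\}_{t\le T}$ on the state space such that $$V^\Delta_t(x)-V^*_t(x) = p\cdot p_d\,\mathcal Z_t(x)\quad\text{for each } t \text{ and each state } x.$$ Further there exist constants $D_1(k)$ and $D_2(k)$, $k=0,\dots,T-1$, independent of $p$, such that $$|\mathcal Z_t(x)|\le D_1(T-t)\,\|x\|_\infty + D_2(T-t),\qquad\text{where } \|x\|_\infty:=\max_{n\in\{1,\dots,N\}}\{h_n+1\}.$$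
   Context: Time is slotted, $t=1,\dots,T$. There are sources $\mathcal N=\{1,\dots,N\}$, each with a buffer of size one, and $d$ channels to a common destination. A state is $x=(\mathbf g,\mathbf h)$ with $\mathbf h=(h_1,\dots,h_N)$, $h_n$ a non-negative integer (age of information of source $n$ at the destination), and $\mathbf g=(g_1,\dots,g_N)$ with each $g_n$ either the symbol $\psi$ (source $n$ has no packet) or a non-negative integer with $g_n<h_n$ (age of the packet waiting at source $n$). Let $S_x=\{n: g_n\neq\psi\}$, $N_x=|S_x|$, $N_x^d=\min\{N_x,d\}$. At each epoch $t<T$ the admissible actions in state $x$ are the subsets $\mathbf a\subseteq S_x$ with $|\mathbf a|=N_x^d$ (so no transmission if $N_x=0$). Transitions: given state $x$ and action $\mathbf a$, each source in $\mathbf a$ is independently successfully transferred with probability $p$ (let $W\subseteq\mathbf a$ be the successful set), and independently each source $n$ receives a new packet with probability $q_n$ (let $\mathcal C$ be the set of sources receiving a new packet); all these events are independent. The next state is: $h_n'=g_n+1$ if $n\in W$, $h_n'=h_n+1$ otherwise; $g_n'=0$ if $n\in\mathcal C$; $g_n'=\psi$ if $n\in W\setminus\mathcal C$; $g_n'=g_n+1$ if $n\notin\mathcal C\cup W$ (with $\psi+1=\psi$). The per-stage cost at every epoch $t=1,\dots,T$ is $c(x)=\sum_{n=1}^N h_n$. Thus $V^*_T(x)=V^\Delta_T(x)=\sum_n h_n$, and for $t<T$, $V^*_t(x)=\min_{\mathbf a}\big[c(x)+\mathbb E[V^*_{t+1}(X')\mid x,\mathbf a]\big]$, i.e. $V^*_t(x)$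 is the minimum over all (possibly non-stationary, history-dependent) policies of the expected total cost $\mathbb E[\sum_{s=t}^T c(X(s))]$ started from $X(t)=x$; $V^\Delta_t(x)$ is the same expected total cost when actions are chosen by $\pi^\Delta$. The policy $\pi^\Delta$ uses, at every epoch $t<T$, the decision rule $d^\Delta(x)\in\arg\min_{\mathbf a}\sum_{i\in\mathbf a}(g_i-h_i)$ over admissible actions $\mathbf a$ (i.e., among sources with packets, choose the $N_x^d$ sources with largest $h_i-g_i$). *)

(* Defs.v *)
From HB Require Import structures.
From mathcomp Require Import all_boot all_order all_algebra.
Set Implicit Arguments. Unset Strict Implicit. Unset Printing Implicit Defensive.
Import Order.TTheory GRing.Theory Num.Theory.
Local Open Scope ring_scope.

(* A state x = (g, h): g n = None encodes the symbol psi (no packet),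
   g n = Some k encodes a waiting packet of age k; h n = AoI of source n. *)
Definition state (N : nat) : Type :=
  ({ffun 'I_N -> option nat} * {ffun 'I_N -> nat})%type.

Definition gst N (x : state N) := x.1.
Definition hst N (x : state N) := x.2.

Definition valid_state N (x : state N) : Prop :=
  forall n : 'I_N, match gst x n with Some k => (k < hst x n)%N | None => true end.

Definition Sx N (x : state N) : {set 'I_N} := [set n | gst x n != None].

Definition admissible N (d : nat) (x : state N) (a : {set 'I_N}) : bool :=
  (a \subset Sx x) && (#|a| == minn #|Sx x| d).

(* next state given successful set W and arrival set C *)
Definition next_state N (x : state N) (W C : {set 'I_N}) : state N :=
  ([ffun n => if n \in C then Some 0%N
              else if n \in W then None else omap S (gst x n)],
   [ffun n => if n \in W then (odflt 0%N (gst x n)).+1 else (hst x n).+1]).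

Definition trans_prob (R : ringType) N (p : R) (q : 'I_N -> R)
    (a W C : {set 'I_N}) : R :=
  (if W \subset a then p ^+ #|W| * (1 - p) ^+ (#|a| - #|W|) else 0) *
  \prod_(n : 'I_N) (if n \in C then q n else 1 - q n).

Definition expect (R : ringType) N (p : R) (q : 'I_N -> R)
    (f : state N -> R) (x : state N) (a : {set 'I_N}) : R :=
  \sum_(W : {set 'I_N}) \sum_(C : {set 'I_N})
     trans_prob p q a W C * f (next_state x W C).

Definition cost (R : ringType) N (x : state N) : R :=
  \sum_(n : 'I_N) (hst x n)%:R.

Definition min_adm (R : realDomainType) N (d : nat) (x : state N)
    (F : {set 'I_N} -> R) : R :=
  let s := [seq F a | a : {set 'I_N} in admissible d x] in
  foldr Num.min (head 0 s) s.

(* optimal cost-to-go with k epochs remaining after the current one *)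
Fixpoint Vopt (R : realDomainType) N (d : nat) (p : R) (q : 'I_N -> R)
    (k : nat) (x : state N) : R :=
  match k with
  | 0%N => cost R x
  | k'.+1 => min_adm d x (fun a => cost R x + expect p q (Vopt d p q k') x a)
  end.

Fixpoint Vpol (R : ringType) N (dr : state N -> {set 'I_N}) (p : R)
    (q : 'I_N -> R) (k : nat) (x : state N) : R :=
  match k with
  | 0%N => cost R x
  | k'.+1 => cost R x + expect p q (Vpol dr p q k') x (dr x)
  end.

Definition Vstar (R : realDomainType) N d (p : R) q (T t : nat) (x : state N) : R :=
  Vopt d p q (T - t) x.
Definition VDelta (R : ringType) N (dr : state N -> {set 'I_N}) (p : R) q
    (T t : nat) (x : state N) : R :=
  Vpol dr p q (T - t) x.

Definition gh_score N (x : state N) (a : {set 'I_N}) : int :=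
  \sum_(i in a) ((odflt 0%N (gst x i))%:Z - (hst x i)%:Z).

Definition is_delta_rule N (d : nat) (dr : state N -> {set 'I_N}) : Prop :=
  forall x : state N, valid_state x ->
    admissible d x (dr x) /\
    forall a, admissible d x a -> gh_score x (dr x) <= gh_score x a.

Definition state_norm N (x : state N) : nat := \max_(n : 'I_N) (hst x n).+1.

(* Main.v *)
Require Import Defs.
From HB Require Import structures.
From mathcomp Require Import all_boot all_order all_algebra.
From mathcomp Require Import ring lra.
Import Order.TTheory GRing.Theory Num.Theory.
Local Open Scope ring_scope.
Set Implicit Arguments. Unset Strict Implicit. Unset Printing Implicit Defensive.
Definition wt (R : realFieldType) (N : nat) (p : R) (a W : {set 'I_N}) : R :=
  if W \subset a then p ^+ #|W| * (1 - p) ^+ (#|a| - #|W|) else 0.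
Definition qt (R : realFieldType) (N : nat) (q : 'I_N -> R) (C : {set 'I_N}) : R :=
  \prod_(n : 'I_N) (if n \in C then q n else 1 - q n).

Lemma tpE (R : realFieldType) (N : nat) (p : R) q (a W C : {set 'I_N}) :
  trans_prob p q a W C = wt p a W * qt q C.
Proof. by []. Qed.

Lemma sum_prod (R : realFieldType) N (F G : 'I_N -> R) :
  \prod_i (F i + G i) = \sum_(J : {set 'I_N}) \prod_i (if i \in J then F i else G i).
Proof. exact: (@bigA_distr R 0 1 *%R +%R). Qed.

Lemma qt_sum1 (R : realFieldType) N (q : 'I_N -> R) : \sum_C qt q C = 1.
Proof.
by rewrite /qt -sum_prod; apply: big1 => i _; rewrite addrC subrK.
Qed.

Lemma wt_prod (R : realFieldType) N (p : R) (a W : {set 'I_N}) :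
  wt p a W = \prod_i (if i \in W then (if i \in a then p else 0)
                                 else (if i \in a then 1 - p else 1)).
Proof.
rewrite (bigID (mem W)) /=.
rewrite (eq_bigr (fun i => if i \in a then p else 0)); last by move=> i ->.
rewrite [X in _ * X](eq_bigr (fun i => if i \in a then 1 - p else 1)); last first.
  by move=> i /negbTE ->.
rewrite /wt; case: (boolP (W \subset a)) => sWa.
  rewrite (eq_bigr (fun i => p)); last by move=> i iW; rewrite (subsetP sWa).
  rewrite prodr_const -big_mkcondr /= prodr_const.
  congr (_ ^+ _ * _ ^+ _).
  rewrite -(cardsID W a) (setIidPr sWa) addKn.
  apply: eq_card => i; rewrite -[RHS]/((i \notin W) && (i \in a)) !inE andbC.
  by [].
move/subsetPn: sWa => [i iW ina].
by rewrite (bigD1 i iW) /= (negbTE ina) !mul0r.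
Qed.

Lemma wt_sum1 (R : realFieldType) N (p : R) (a : {set 'I_N}) :
  \sum_W wt p a W = 1.
Proof.
under eq_bigr do rewrite wt_prod.
rewrite -sum_prod; apply: big1 => i _; case: (i \in a) => //.
by rewrite addrC subrK.
by rewrite add0r.
Qed.

Lemma wt_ge0 (R : realFieldType) N (p : R) (a W : {set 'I_N}) :
  0 <= p <= 1 -> 0 <= wt p a W.
Proof.
move=> /andP [p0 p1]; rewrite /wt; case: ifP => // _.
by apply: mulr_ge0; apply: exprn_ge0; rewrite ?subr_ge0.
Qed.

Lemma qt_ge0 (R : realFieldType) N (q : 'I_N -> R) C :
  (forall n, 0 <= q n <= 1) -> 0 <= qt q C.
Proof.
move=> hq; rewrite /qt; apply: prodr_ge0 => i _.
by case: (hq i) => /andP [? ?]; case: ifP; rewrite ?subr_ge0.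
Qed.

Lemma wt_mem (R : realFieldType) N (p : R) (a : {set 'I_N}) (n : 'I_N) :
  \sum_(W : {set 'I_N}) (if n \in W then wt p a W else 0) = if n \in a then p else 0.
Proof.
pose X i := if i \in a then p else 0.
pose Y i := if i == n then 0 else if i \in a then 1 - p else 1.
transitivity (\sum_(W : {set 'I_N}) \prod_i (if i \in W then X i else Y i)).
  apply: eq_bigr => W _; rewrite wt_prod; case: ifP => nW.
    apply: eq_bigr => i _; rewrite /X /Y; case: ifP => // iW.
    by case: eqP => // ein; rewrite ein nW in iW.
  by rewrite (bigD1 n) //= nW /Y eqxx mul0r.
rewrite -sum_prod (bigD1 n) //= big1 ?mulr1.
  by rewrite /Y eqxx addr0.
move=> i /negbTE ine; rewrite /X /Y ine; case: (i \in a).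
  by rewrite addrC subrK.
by rewrite add0r.
Qed.

Lemma wt_lin (R : realFieldType) N (p : R) (a : {set 'I_N}) (f : 'I_N -> R) :
  \sum_W wt p a W * (\sum_(n in W) f n) = p * \sum_(n in a) f n.
Proof.
transitivity (\sum_(W : {set 'I_N}) \sum_(n : 'I_N) (if n \in W then wt p a W else 0) * f n).
  apply: eq_bigr => W _; rewrite big_distrr /= big_mkcond /=.
  by apply: eq_bigr => n _; case: ifP; rewrite ?mul0r.
rewrite (exchange_big _ _ (index_enum _)) /= [RHS]big_distrr [RHS]big_mkcond /=.
apply: eq_bigr => n _; rewrite -big_distrl /= wt_mem.
by case: ifP; rewrite ?mul0r ?mulr0 // mulrC.
Qed.

Lemma wt_empty (R : realFieldType) N (p : R) (a : {set 'I_N}) :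
  wt p a set0 = (1 - p) ^+ #|a|.
Proof. by rewrite /wt sub0set cards0 expr0 mul1r subn0. Qed.

Lemma bernoulli (R : realFieldType) (p : R) m :
  0 <= p <= 1 -> 1 - (1 - p) ^+ m <= m%:R * p.
Proof.
move=> /andP [p0 p1]; elim: m => [|m IH]; first by rewrite expr0 subrr mul0r.
have h0 : 0 <= 1 - p by rewrite subr_ge0.
have h1 : (1 - p) ^+ m <= 1 by rewrite exprn_ile1 // lerBlDr lerDl.
rewrite exprS -addn1 natrD.
have hy : p * (1 - p) ^+ m <= p by rewrite -[X in _ <= X]mulr1 ler_wpM2l.
set y := (1 - p) ^+ m in IH h1 hy *.
nra.
Qed.

Definition delta (R : realFieldType) N (x : state N) (n : 'I_N) : R :=
  (hst x n)%:R - (odflt 0%N (gst x n))%:R.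

Lemma cost_next (R : realFieldType) N (x : state N) (W C : {set 'I_N}) :
  cost R (next_state x W C) = cost R x + N%:R - \sum_(n in W) delta R x n.
Proof.
have -> : (N%:R : R) = \sum_(n : 'I_N) 1 by rewrite sumr_const card_ord.
rewrite /cost [X in _ - X]big_mkcond /= -big_split /= -sumrB.
apply: eq_bigr => n _; rewrite /hst /next_state /= ffunE /delta.
case: ifP => _; rewrite -addn1 natrD; ring.
Qed.

Lemma valid_next N (x : state N) (W C : {set 'I_N}) :
  valid_state x -> valid_state (next_state x W C).
Proof.
move=> vx n; rewrite /gst /hst /next_state /= !ffunE.
case: ifP => nC; case: ifP => nW //=.
move: (vx n); rewrite /gst /hst; case: (x.1 n) => //=.
Qed.

Lemma h_lt_norm N (x : state N) n : (hst x n < state_norm x)%N.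
Proof. exact: (@leq_bigmax _ (fun n => (hst x n).+1) n). Qed.

Lemma g_le_h N (x : state N) n : valid_state x -> (odflt 0%N (gst x n) <= hst x n)%N.
Proof. by move=> /(_ n); case: (gst x n) => //= k /ltnW. Qed.

Lemma norm_next N (x : state N) (W C : {set 'I_N}) :
  valid_state x -> (state_norm (next_state x W C) <= (state_norm x).+1)%N.
Proof.
move=> vx; apply/bigmax_leqP => n _; rewrite /hst /next_state /= ffunE ltnS.
case: ifP => _; last exact: h_lt_norm.
exact: leq_ltn_trans (g_le_h n vx) (h_lt_norm x n).
Qed.

Lemma delta_ge0 (R : realFieldType) N (x : state N) n :
  valid_state x -> 0 <= delta R x n.
Proof. by move=> vx; rewrite /delta subr_ge0 ler_nat g_le_h. Qed.

Lemma delta_le (R : realFieldType) N (x : state N) n :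
  valid_state x -> delta R x n <= (state_norm x)%:R.
Proof.
move=> vx; rewrite /delta lerBlDr; apply: ler_wpDr; first by [].
by rewrite ler_nat ltnW // h_lt_norm.
Qed.

Lemma sdelta_ge0 (R : realFieldType) N (x : state N) (a : {set 'I_N}) :
  valid_state x -> 0 <= \sum_(n in a) delta R x n.
Proof. by move=> vx; apply: sumr_ge0 => n _; apply: delta_ge0. Qed.

Lemma sdelta_le (R : realFieldType) N (x : state N) (a : {set 'I_N}) :
  valid_state x -> \sum_(n in a) delta R x n <= N%:R * (state_norm x)%:R.
Proof.
move=> vx; apply: le_trans (_ : \sum_(n in a) ((state_norm x)%:R : R) <= _).
  by apply: ler_sum => n _; apply: delta_le.
rewrite sumr_const -(mulr_natl ((state_norm x)%:R) #|a|); apply: ler_wpM2r => //; rewrite ler_nat.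
by apply: leq_trans (max_card _) _; rewrite card_ord.
Qed.

Lemma gh_score_delta (R : realFieldType) N (x : state N) (a : {set 'I_N}) :
  (gh_score x a)%:~R = - \sum_(n in a) delta R x n :> R.
Proof.
rewrite /gh_score rmorph_sum /= -sumrN; apply: eq_bigr => n _.
by rewrite /delta rmorphB /= opprB.

Qed.

Lemma foldr_min_le (R : realFieldType) (z : R) (s : seq R) y :
  y \in s -> foldr Num.min z s <= y.
Proof.
elim: s => [|y' s IH] //=; rewrite inE => /orP [/eqP ->|ys].
  by rewrite ge_min lexx.
by rewrite ge_min IH // orbT.
Qed.

Lemma foldr_min_in (R : realFieldType) (z : R) (s : seq R) :
  foldr Num.min z s \in z :: s.
Proof.
elim: s => [|y' s IH] /=; first by rewrite inE eqxx.
rewrite minEle; case: ifP => _; first by rewrite !inE eqxx orbT.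
move: IH; rewrite !inE => /orP [->//|->]; by rewrite !orbT.
Qed.

Lemma min_adm_le (R : realFieldType) N d (x : state N) (F : {set 'I_N} -> R) a :
  admissible d x a -> min_adm d x F <= F a.
Proof. by move=> ad; rewrite /min_adm; apply: foldr_min_le; apply: image_f. Qed.

Lemma min_adm_in (R : realFieldType) N d (x : state N) (F : {set 'I_N} -> R) a0 :
  admissible d x a0 -> exists2 a, admissible d x a & min_adm d x F = F a.
Proof.
move=> ad0; rewrite /min_adm.
set s := [seq F a | a in admissible d x].
have s0 : F a0 \in s by apply: image_f.
have : foldr Num.min (head 0 s) s \in s.
  move: (foldr_min_in (head 0 s) s); rewrite inE => /orP [/eqP ->|//].
  by case: s s0 => //= y s' _; rewrite inE eqxx.
by move=> /imageP [a ada ->]; exists a.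
Qed.

Lemma expect_split (R : realFieldType) N (p : R) q (f : state N -> R) x a :
  expect p q f x a =
  \sum_W wt p a W * (\sum_C qt q C * f (next_state x W C)).
Proof.
rewrite /expect; apply: eq_bigr => W _; rewrite big_distrr /=.
by apply: eq_bigr => C _; rewrite tpE mulrA.
Qed.

Lemma avg_bound (R : realFieldType) (I : finType) (w g : I -> R) lo hi :
  (forall i, 0 <= w i) -> \sum_i w i = 1 -> (forall i, lo <= g i <= hi) ->
  lo <= \sum_i w i * g i <= hi.
Proof.
move=> w0 w1 gb; apply/andP; split.
  rewrite -[lo]mul1r -w1 big_distrl /=; apply: ler_sum => i _.
  by apply: ler_wpM2l => //; case/andP: (gb i).
rewrite -[hi]mul1r -w1 big_distrl /=; apply: ler_sum => i _.
by apply: ler_wpM2l => //; case/andP: (gb i).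
Qed.

Lemma expect_bound (R : realFieldType) N (p : R) q (f : state N -> R) x a lo hi :
  0 <= p <= 1 -> (forall n, 0 <= q n <= 1) ->
  (forall W C, lo <= f (next_state x W C) <= hi) ->
  lo <= expect p q f x a <= hi.
Proof.
move=> hp hq hf; rewrite expect_split; apply: avg_bound.
- by move=> W; apply: wt_ge0.
- exact: wt_sum1.
move=> W; apply: avg_bound => //.
- by move=> C; apply: qt_ge0.
- exact: qt_sum1.
Qed.

Lemma expect_sub (R : realFieldType) N (p : R) q (f g : state N -> R) x a :
  expect p q f x a - expect p q g x a = expect p q (fun z => f z - g z) x a.
Proof.
rewrite /expect -sumrB; apply: eq_bigr => W _; rewrite -sumrB.
by apply: eq_bigr => C _; rewrite mulrBr.
Qed.

Lemma expect_affine (R : realFieldType) N (p : R) q (f e : state N -> R) x a (A K : R) :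
  (forall z, f z = A * cost R z + K - e z) ->
  expect p q f x a =
  A * (cost R x + N%:R) + K - A * p * (\sum_(n in a) delta R x n)
  - \sum_W wt p a W * (\sum_C qt q C * e (next_state x W C)).
Proof.
move=> fE; rewrite expect_split.
have inner : forall W, \sum_C qt q C * f (next_state x W C) =
   (A * (cost R x + N%:R) + K) - A * (\sum_(n in W) delta R x n)
   - \sum_C qt q C * e (next_state x W C).
  move=> W.
  have -> : \sum_C qt q C * f (next_state x W C) =
     \sum_C (qt q C * ((A * (cost R x + N%:R) + K) - A * (\sum_(n in W) delta R x n))
             - qt q C * e (next_state x W C)).
    by apply: eq_bigr => C _; rewrite fE cost_next; ring.
  by rewrite sumrB -big_distrl /= qt_sum1 mul1r.
under eq_bigr do rewrite inner.
have -> : \sum_W wt p a W * (A * (cost R x + N%:R) + K - A * (\sum_(n in W) delta R x n)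
   - \sum_C qt q C * e (next_state x W C)) =
   \sum_W (wt p a W * (A * (cost R x + N%:R) + K)
           - A * (wt p a W * (\sum_(n in W) delta R x n))
           - wt p a W * (\sum_C qt q C * e (next_state x W C))).
  by apply: eq_bigr => W _; ring.
set S := \sum_(n in a) delta R x n.
rewrite !sumrB -big_distrl /= wt_sum1 mul1r -big_distrr /= wt_lin -/S.
by rewrite mulrA.
Qed.

Lemma expect_affine2 (R : realFieldType) N (p : R) q (f e : state N -> R) x a (A K : R) :
  (forall z, f z = A * cost R z + K - e z) ->
  expect p q f x a =
  A * (cost R x + N%:R) + K - A * p * (\sum_(n in a) delta R x n) - expect p q e x a.
Proof. by move=> fE; rewrite (expect_affine _ _ _ _ fE) expect_split. Qed.

Lemma ex_split (R : realFieldType) N (p : R) q (e : state N -> R) x b :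
  expect p q e x b = (1 - p) ^+ #|b| * (\sum_C qt q C * e (next_state x set0 C))
     + \sum_(W | W != set0) wt p b W * (\sum_C qt q C * e (next_state x W C)).
Proof. by rewrite expect_split (bigD1 set0) //= wt_empty. Qed.

Lemma rest_bound (R : realFieldType) N (p : R) q (e : state N -> R) x b M :
  0 <= p <= 1 -> (forall n, 0 <= q n <= 1) ->
  (forall W C, 0 <= e (next_state x W C) <= M) ->
  0 <= \sum_(W | W != set0) wt p b W * (\sum_C qt q C * e (next_state x W C))
    <= #|b|%:R * p * M.
Proof.
move=> hp hq he.
have eb : forall W, 0 <= \sum_C qt q C * e (next_state x W C) <= M.
  move=> W; apply: avg_bound => //; [by move=> C; apply: qt_ge0 | exact: qt_sum1].
have M0 : 0 <= M by case/andP: (he set0 set0) => h1 h2; apply: le_trans h2.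
apply/andP; split.
  apply: sumr_ge0 => W _; apply: mulr_ge0; first exact: wt_ge0.
  by case/andP: (eb W).
apply: le_trans (_ : \sum_(W | W != set0) wt p b W * M <= _).
  apply: ler_sum => W _; apply: ler_wpM2l; first exact: wt_ge0.
  by case/andP: (eb W).
rewrite -big_distrl /=; apply: ler_wpM2r => //.
have -> : \sum_(W | W != set0) wt p b W = 1 - (1 - p) ^+ #|b|.
  have h := wt_sum1 p b; rewrite (bigD1 set0) //= wt_empty in h.
  by apply: (addrI ((1 - p) ^+ #|b|)); rewrite h; ring.
exact: bernoulli.
Qed.

Fixpoint alpha (R : realFieldType) (N : nat) (k : nat) : R :=
  match k with 0%N => 0 | k'.+1 => alpha R N k' + (k'.+1 * N)%:R end.
Fixpoint beta (R : realFieldType) (N : nat) (k : nat) : R :=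
  match k with 0%N => 0 | k'.+1 => beta R N k' + alpha R N k' end.

Lemma alpha_ge0 (R : realFieldType) N k : 0 <= alpha R N k.
Proof. by elim: k => //= k IH; apply: addr_ge0. Qed.
Lemma beta_ge0 (R : realFieldType) N k : 0 <= beta R N k.
Proof. by elim: k => //= k IH; apply: addr_ge0 => //; apply: alpha_ge0. Qed.

Definition nrm N (x : state N) (R : realFieldType) : R := (state_norm x)%:R.

Lemma nrm_next (R : realFieldType) N (x : state N) W C :
  valid_state x -> nrm (next_state x W C) R <= nrm x R + 1.
Proof. by move=> vx; rewrite /nrm natr1 ler_nat norm_next. Qed.

Lemma opt_bound (R : realFieldType) N d (p : R) q (dr : state N -> {set 'I_N}) k :
  0 <= p <= 1 -> (forall n, 0 <= q n <= 1) -> is_delta_rule d dr ->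
  forall y : state N, valid_state y ->
  0 <= k.+1%:R * cost R y + alpha R N k - Vopt d p q k y
    <= p * (alpha R N k * nrm y R + beta R N k).
Proof.
move=> hp hq hdr; elim: k => [|k IH] y vy.
  by rewrite /= mul1r addr0 subrr mul0r addr0 mulr0 lexx.
set e := fun z => k.+1%:R * cost R z + alpha R N k - Vopt d p q k z.
have fE : forall z, Vopt d p q k z = k.+1%:R * cost R z + alpha R N k - e z.
  by move=> z; rewrite /e; ring.
rewrite [Vopt d p q k.+1 y]/=.
have [a ada ->] := min_adm_in
  (fun a => cost R y + expect p q (Vopt d p q k) y a) (proj1 (hdr y vy)).
rewrite (expect_affine2 _ _ _ _ fE).
have eb : 0 <= expect p q e y a <= p * (alpha R N k * (nrm y R + 1) + beta R N k).
  apply: expect_bound => // W C; have := IH _ (valid_next W C vy).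
  rewrite -/(e _) => /andP [h1 h2]; rewrite h1 /=; apply: le_trans h2 _.
  case/andP: hp => p0 _; apply: ler_wpM2l => //; rewrite lerD2r.
  by apply: ler_wpM2l; [apply: alpha_ge0 | apply: nrm_next].
have sb := sdelta_ge0 R a vy; have sl := sdelta_le R a vy.
case/andP: hp => p0 p1; case/andP: eb => e0 e1.
rewrite /= natrM.
set S := \sum_(n in a) delta R y n in sb sl *.
set E := expect p q e y a in e0 e1 *.
have -> : k.+2%:R * cost R y + (alpha R N k + k.+1%:R * N%:R) -
    (cost R y + (k.+1%:R * (cost R y + N%:R) + alpha R N k - k.+1%:R * p * S - E))
    = k.+1%:R * p * S + E.
  by rewrite -[k.+2]addn1 natrD; ring.
have hS : 0 <= k.+1%:R * p * S by rewrite !mulr_ge0.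
apply/andP; split; first exact: addr_ge0.
have hS2 : k.+1%:R * p * S <= p * (k.+1%:R * N%:R * nrm y R).
  have -> : k.+1%:R * p * S = p * (k.+1%:R * S) by ring.
  rewrite -mulrA; apply: ler_wpM2l => //; apply: ler_wpM2l => //.
apply: le_trans (lerD hS2 e1) _; rewrite /nrm; set n := (state_norm y)%:R.
rewrite -mulrDr; apply: ler_wpM2l => //; rewrite le_eqVlt; apply/orP; left; apply/eqP; ring.
Qed.

Lemma e_next_bound (R : realFieldType) N d (p : R) q (dr : state N -> {set 'I_N}) k
  (x : state N) W C :
  0 <= p <= 1 -> (forall n, 0 <= q n <= 1) -> is_delta_rule d dr -> valid_state x ->
  0 <= k.+1%:R * cost R (next_state x W C) + alpha R N k - Vopt d p q k (next_state x W C)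
    <= p * (alpha R N k * (nrm x R + 1) + beta R N k).
Proof.
move=> hp hq hdr vx; have := opt_bound k hp hq hdr (valid_next W C vx).
move=> /andP [h1 h2]; rewrite h1 /=; apply: le_trans h2 _.
case/andP: hp => p0 _; apply: ler_wpM2l => //; rewrite lerD2r.
by apply: ler_wpM2l; [apply: alpha_ge0 | apply: nrm_next].
Qed.

Fixpoint gam (R : realFieldType) (N : nat) (k : nat) : R :=
  match k with 0%N => 0 | k'.+1 => gam R N k' + N%:R * alpha R N k' end.
Fixpoint th (R : realFieldType) (N : nat) (k : nat) : R :=
  match k with 0%N => 0
  | k'.+1 => th R N k' + gam R N k' + N%:R * (alpha R N k' + beta R N k') end.

Lemma gam_ge0 (R : realFieldType) N k : 0 <= gam R N k.
Proof. by elim: k => //= k IH; apply: addr_ge0 => //; apply: mulr_ge0 => //; apply: alpha_ge0. Qed.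
Lemma th_ge0 (R : realFieldType) N k : 0 <= th R N k.
Proof.
elim: k => //= k IH; apply: addr_ge0; first by apply: addr_ge0 => //; apply: gam_ge0.
by apply: mulr_ge0 => //; apply: addr_ge0; [apply: alpha_ge0 | apply: beta_ge0].
Qed.

Lemma pol_bound (R : realFieldType) N d (p : R) q (dr : state N -> {set 'I_N}) k :
  0 <= p <= 1 -> (forall n, 0 <= q n <= 1) -> is_delta_rule d dr ->
  forall x : state N, valid_state x ->
  0 <= Vpol dr p q k x - Vopt d p q k x <= p * p * (gam R N k * nrm x R + th R N k).
Proof.
move=> hp hq hdr; elim: k => [|k IH] x vx.
  by rewrite /= subrr mul0r add0r mulr0 lexx.
rewrite [Vopt d p q k.+1 x]/= [Vpol dr p q k.+1 x]/=.
set Q := fun a => cost R x + expect p q (Vopt d p q k) x a.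
case: (hdr x vx) => addr hsc.
have [a ada hm] := min_adm_in Q addr.
have hle := min_adm_le Q addr.
rewrite hm in hle *.
set e := fun z => k.+1%:R * cost R z + alpha R N k - Vopt d p q k z.
have fE : forall z, Vopt d p q k z = k.+1%:R * cost R z + alpha R N k - e z.
  by move=> z; rewrite /e; ring.
have T1 : 0 <= expect p q (fun z => Vpol dr p q k z - Vopt d p q k z) x (dr x)
            <= p * p * (gam R N k * (nrm x R + 1) + th R N k).
  apply: expect_bound => // W C; have := IH _ (valid_next W C vx).
  move=> /andP [h1 h2]; rewrite h1 /=; apply: le_trans h2 _.
  case/andP: hp => p0 _; apply: ler_wpM2l; first by rewrite mulr_ge0.
  rewrite lerD2r; by apply: ler_wpM2l; [apply: gam_ge0 | apply: nrm_next].
have -> : cost R x + expect p q (Vpol dr p q k) x (dr x) - Q a =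
    expect p q (fun z => Vpol dr p q k z - Vopt d p q k z) x (dr x) + (Q (dr x) - Q a).
  by rewrite -expect_sub /Q; ring.
case/andP: T1 => t0 t1.
have q0 : 0 <= Q (dr x) - Q a by rewrite subr_ge0.
apply/andP; split; first exact: addr_ge0.
set M := p * (alpha R N k * (nrm x R + 1) + beta R N k).
have eb : forall W C, 0 <= e (next_state x W C) <= M.
  by move=> W C; rewrite /e; exact: (e_next_bound k W C hp hq hdr vx).
have hcard : #|a| = #|dr x|.
  by move: ada addr => /andP [_ /eqP ->] /andP [_ /eqP ->].
have hS : \sum_(n in a) delta R x n <= \sum_(n in dr x) delta R x n.
  by have := hsc a ada; rewrite -(ler_int R) !gh_score_delta lerN2.
have ra := rest_bound a hp hq eb.
have rd := rest_bound (dr x) hp hq eb.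
case/andP: ra => ra0 ra1; case/andP: rd => rd0 rd1.
have haN : (#|a|%:R : R) <= N%:R.
  by rewrite ler_nat; apply: leq_trans (max_card _) _; rewrite card_ord.
case/andP: hp => p0 p1.
have M0 : 0 <= M by rewrite mulr_ge0 // addr_ge0 ?beta_ge0 // mulr_ge0 ?alpha_ge0 // addr_ge0.
have T2 : Q (dr x) - Q a <= N%:R * p * M.
  rewrite /Q !(expect_affine2 _ _ _ _ fE) !ex_split hcard.
  set S1 := \sum_(n in a) delta R x n in hS *.
  set S2 := \sum_(n in dr x) delta R x n in hS *.
  set Ra := \sum_(W | W != set0) wt p a W * _ in ra0 ra1 *.
  set Rd := \sum_(W | W != set0) wt p (dr x) W * _ in rd0 rd1 *.
  set E0 := _ * \sum_C qt q C * e (next_state x set0 C).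
  have hk : 0 <= k.+1%:R * p by rewrite mulr_ge0.
  have hS' : k.+1%:R * p * S1 <= k.+1%:R * p * S2 by apply: ler_wpM2l.
  apply: le_trans (_ : Ra <= _).
    lra.
  apply: le_trans ra1 _; rewrite -!mulrA; apply: ler_wpM2r => //; by rewrite mulr_ge0.
apply: le_trans (lerD t1 T2) _.
rewrite le_eqVlt; apply/orP; left; apply/eqP; rewrite /M /nrm /=; ring.
Qed.

Theorem theorem1 (R : realFieldType) (N d T : nat) (q : 'I_N -> R)
    (dr : state N -> {set 'I_N}) :
  (1 <= d)%N ->
  (forall n, 0 <= q n <= 1) ->
  is_delta_rule d dr ->
  exists D1 D2 : nat -> R,
    forall p : R, 0 < p <= 1 ->
      let pd := 1 - (1 - p) ^+ d in
      exists Z : nat -> state N -> R,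
        forall (t : nat) (x : state N), (1 <= t <= T)%N -> valid_state x ->
          [/\ 0 <= Z t x,
              VDelta dr p q T t x - Vstar d p q T t x = p * pd * Z t x
            & `|Z t x| <= D1 (T - t)%N * (state_norm x)%:R + D2 (T - t)%N].
Proof.
move=> d1 hq hdr; exists (gam R N), (th R N) => p /andP [p0 p1] pd.
have hp : 0 <= p <= 1 by rewrite ltW.
have ppd : p <= pd.
  rewrite /pd -(prednK d1) exprS; set d' := d.-1.
  have y1 : (1 - p) ^+ d' <= 1 by rewrite exprn_ile1 // ?subr_ge0 // lerBlDr lerDl ltW.
  have y0 : 0 <= (1 - p) ^+ d' by rewrite exprn_ge0 // subr_ge0.
  set y := (1 - p) ^+ d' in y0 y1 *; nra.
have pp0 : 0 < p * pd by rewrite mulr_gt0 // (lt_le_trans p0 ppd).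
exists (fun t x => (VDelta dr p q T t x - Vstar d p q T t x) / (p * pd)).
move=> t x _ vx.
have := pol_bound (T - t) hp hq hdr vx; rewrite /VDelta /Vstar => /andP [g0 g1].
have Z0 : 0 <= (Vpol dr p q (T - t) x - Vopt d p q (T - t) x) / (p * pd).
  by rewrite divr_ge0 // ltW.
split => //.
  by rewrite mulrC divfK // gt_eqF.
rewrite ger0_norm // ler_pdivrMr //; apply: le_trans g1 _.
have B0 : 0 <= gam R N (T - t) * nrm x R + th R N (T - t).
  by rewrite addr_ge0 ?th_ge0 // mulr_ge0 ?gam_ge0.
rewrite [X in _ <= X]mulrC /nrm; apply: ler_wpM2r => //.
by apply: ler_wpM2l => //; rewrite ltW.
Qed.
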